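(* Let $(D, \{ \prec_\alpha, \succ_\alpha, \curlyvee_{\alpha, \beta} \}_{\alpha, \beta \in \Omega})$ be an NS-family algebra. Then $(D, \{ \ast_{\alpha, \beta} \}_{\alpha, \beta \in \Omega})$ is an $\Omega$-associative algebra, where $x \ast_{\alpha, \beta} y = x \prec_\beta y + x \succ_\alpha y + x \curlyvee_{\alpha, \beta} y$.
   Context: $\Omega$ is a semigroup. An NS-family algebra is a vector space $D$ with bilinear maps $\{ \prec_\alpha, \succ_\alpha, \curlyvee_{\alpha, \beta}\}_{\alpha, \beta \in \Omega}$ such that for all $x,y,z$, $\alpha,\beta,\gamma$: (1) $(x \prec_\alpha y) \prec_\beta z = x \prec_{\alpha \beta} ( y \prec_\beta z + y \succ_\alpha z + y \curlyvee_{\alpha, \beta} z)$; (2) $(x \succ_\alpha y) \prec_\beta z = x \succ_\alpha (y \prec_\beta z)$; (3) $(x \prec_\beta y + x \succ_\alpha y + x \curlyvee_{\alpha, \beta} y) \succ_{\alpha \beta} z = x \succ_\alpha (y \succ_\beta z)$; (4) $( x \prec_\beta y + x \succ_\alpha y + x \curlyvee_{\alpha, \beta} y ) \curlyvee_{\alpha \beta, \gamma} z + (x \curlyvee_{\alpha, \beta} y) \prec_\gamma z = x \succ_\alpha (y \curlyvee_{\beta, \gamma} z) + x \curlyvee_{\alpha, \beta \gamma} ( y \prec_\gamma z + y \succ_\beta z + y \curlyvee_{\beta, \gamma} z )$. An $\Omega$-associative algebra is a vector space $B$ with bilinear maps $\{\cdot_{\alpha,\beta}\}_{\alpha,\beta\in\Omega}$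 such that $(a \cdot_{\alpha , \beta} b) \cdot_{\alpha \beta, \gamma} c = a \cdot_{\alpha, \beta \gamma} (b \cdot_{\beta, \gamma} c)$ for all $a,b,c\in B$, $\alpha,\beta,\gamma\in\Omega$. *)

(* Defs.v *)
From HB Require Import structures.
From mathcomp Require Import all_boot all_algebra.
Set Implicit Arguments. Unset Strict Implicit. Unset Printing Implicit Defensive.
Import GRing.Theory.
Local Open Scope ring_scope.

Definition semigroup_assoc (Omega : Type) (mul : Omega -> Omega -> Omega) :=
  forall a b c, mul (mul a b) c = mul a (mul b c).

Definition bilinear_map (K : pzRingType) (D : lmodType K) (f : D -> D -> D) :=
  (forall y, linear (fun x => f x y)) /\ (forall x, linear (f x)).

Definition is_NS_family_algebra (K : pzRingType) (D : lmodType K)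
  (Omega : Type) (mul : Omega -> Omega -> Omega)
  (prec succ : Omega -> D -> D -> D) (vee : Omega -> Omega -> D -> D -> D) :=
  [/\ (forall a, bilinear_map (prec a)),
      (forall a, bilinear_map (succ a)),
      (forall a b, bilinear_map (vee a b)) &
  [/\
      (forall x y z a b,
         prec b (prec a x y) z
         = prec (mul a b) x (prec b y z + succ a y z + vee a b y z)),
      (forall x y z a b,
         prec b (succ a x y) z = succ a x (prec b y z)),
      (forall x y z a b,
         succ (mul a b) (prec b x y + succ a x y + vee a b x y) z
         = succ a x (succ b y z)) &
      (forall x y z a b c,
         vee (mul a b) c (prec b x y + succ a x y + vee a b x y) z
         + prec c (vee a b x y) z
         = succ a x (vee b c y z)
           + vee a (mul b c) x (prec c y z + succ b y z + vee b c y z))]].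

Definition is_Omega_associative_algebra (K : pzRingType) (D : lmodType K)
  (Omega : Type) (mul : Omega -> Omega -> Omega)
  (dot : Omega -> Omega -> D -> D -> D) :=
  (forall a b, bilinear_map (dot a b)) /\
  (forall x y z a b c,
     dot (mul a b) c (dot a b x y) z = dot a (mul b c) x (dot b c y z)).

Definition NS_star (K : pzRingType) (D : lmodType K) (Omega : Type)
  (prec succ : Omega -> D -> D -> D) (vee : Omega -> Omega -> D -> D -> D)
  (a b : Omega) (x y : D) : D :=
  prec b x y + succ a x y + vee a b x y.

(* Main.v *)
Require Import Defs.
From HB Require Import structures.
From mathcomp Require Import all_boot all_algebra.
Import GRing.Theory.
Local Open Scope ring_scope.

Lemma lin3 (K : fieldType) (D : lmodType K) (f g h : D -> D) :
  linear f -> linear g -> linear h -> linear (fun x => f x + g x + h x).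
Proof.
move=> Hf Hg Hh k u v.
rewrite Hf Hg Hh !scalerDr.
by rewrite (addrACA (k *: f u)) [LHS]addrACA.
Qed.

Theorem proposition4p2 (K : fieldType) (D : lmodType K)
  (Omega : Type) (mul : Omega -> Omega -> Omega)
  (prec succ : Omega -> D -> D -> D) (vee : Omega -> Omega -> D -> D -> D) :
  semigroup_assoc mul ->
  is_NS_family_algebra mul prec succ vee ->
  is_Omega_associative_algebra mul (NS_star prec succ vee).
Proof.
move=> _ [Hp Hs Hv [H1 H2 H3 H4]]; split.
  move=> a b; rewrite /NS_star; split.
  + move=> y; apply: lin3; [exact: (Hp b).1 | exact: (Hs a).1 | exact: (Hv a b).1].
  + move=> x; apply: lin3; [exact: (Hp b).2 | exact: (Hs a).2 | exact: (Hv a b).2].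
move=> x y z a b c; rewrite /NS_star.
have lp : forall d w, {morph prec d ^~ w : u v / u + v}.
  by move=> d w u v; have := (Hp d).1 w 1 u v; rewrite !scale1r.
have ls : forall d w, {morph succ d w : u v / u + v}.
  by move=> d w u v; have := (Hs d).2 w 1 u v; rewrite !scale1r.
rewrite !lp H1 H2 H3 !ls.
have E := H4 x y z a b c.
move: E.
set P := prec (mul b c) _ _; set S1 := succ a x (prec c y z);
set S2 := succ a x (succ b y z); set S3 := succ a x (vee b c y z);
set Q := prec c (vee a b x y) z; set V := vee (mul a b) c _ z;
set W := vee a (mul b c) _ _ => E.
rewrite -!addrA; congr (_ + _).
rewrite (addrC S2 V) (addrA Q V) (addrC Q V) E.
by rewrite (addrC (S3 + W) S2).
Qed.
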